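(* Let $y=Fx+u\in\mathcal Y_N$. For any $v\in\mathcal Y_N$, $$\int_{-N}^NT^{\rm qnll}(y;x)\nabla v\,dx\le\tfrac12M^{(3,0)}\|\nabla u\|^2_{L^4(\Omega_{\rm l})}\|\nabla v\|_{L^2(\Omega_{\rm l})},$$ where $T^{\rm qnll}(y;x)=W_{\rm L}'(\nabla y(x))-W'(\nabla y(x))$ for $x\in\Omega_{\rm l}$ and $T^{\rm qnll}(y;x)=0$ otherwise.
   Context: One-dimensional lattice $\mathbb Z$, $F>0$. For a lattice function $w$, $\nabla w(x)=w(\xi)-w(\xi-1)$ for $x\in(\xi-1,\xi)$. $\mathcal Y_N=\{Fx+u: u:\mathbb Z\to\mathbb R,\ u(\xi)=0$ for $|\xi|\ge N\}$. $\mathcal R=\{\pm1,\pm2\}$, $V\in C^3(\mathbb R^{\mathcal R})$; $m(\boldsymbol\rho)=\prod_i|\rho_i|\sup_g|\partial_{\rho_1}\cdots\partial_{\rho_j}V(g)|$ for $\boldsymbol\rho\in\mathcal R^j$, $M^{(j,s)}=\sum_{\boldsymbol\rho\in\mathcal R^j}m(\boldsymbol\rho)|\boldsymbol\rho|_\infty^s$. $W(G)=V((G\rho)_{\rho\in\mathcal R})$; $W_{\rm L}(G)=W(F)+W'(F)(G-F)+\frac12W''(F)(G-F)^2$. $\Omega_{\rm l}=[-N,-L]\cup[L,N]$ for an integer $L<N$. $T^{\rm qnll}$ is the stress difference between the QNLL model (using $W_{\rm L}$ on $\Omega_{\rm l}$) and the QNL model (using $W$ there); they agree off $\Omega_{\rm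 l}$. *)

(* Defs.v *)
From HB Require Import structures.
From mathcomp Require Import all_boot all_order all_algebra.
From mathcomp Require Import all_classical all_reals all_analysis.
Set Implicit Arguments. Unset Strict Implicit. Unset Printing Implicit Defensive.
Import Order.TTheory GRing.Theory Num.Theory.
Import numFieldNormedType.Exports.
Local Open Scope classical_set_scope.
Local Open Scope ring_scope.

Section QNLL.
Variable R : realType.

(* Interaction range R = {-2,-1,1,2}, indexed by 'I_4. *)
Definition rho (i : 'I_4) : R := nth 0 [:: -2; -1; 1; 2] i.

Definition evec (i : 'I_4) : 'rV[R]_4 := delta_mx 0 i.

Definition pd (i : 'I_4) (f : 'rV[R]_4 -> R) : 'rV[R]_4 -> R := 'D_(evec i) f.

Definition C3 (V : 'rV[R]_4 -> R) : Prop :=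
  continuous V /\
  (forall i g, derivable V g (evec i)) /\
  (forall i, continuous (pd i V)) /\
  (forall i j g, derivable (pd i V) g (evec j)) /\
  (forall i j, continuous (pd j (pd i V))) /\
  (forall i j k g, derivable (pd j (pd i V)) g (evec k)) /\
  (forall i j k, continuous (pd k (pd j (pd i V)))).

Definition bounded_third (V : 'rV[R]_4 -> R) : Prop :=
  exists M : R, forall i j k g, `|pd i (pd j (pd k V)) g| <= M.

Definition m3 (V : 'rV[R]_4 -> R) (i j k : 'I_4) : R :=
  `|rho i * rho j * rho k| *
    sup (range (fun g => `|pd i (pd j (pd k V)) g|)).

Definition M30 (V : 'rV[R]_4 -> R) : R :=
  \sum_(i < 4) \sum_(j < 4) \sum_(k < 4) m3 V i j k.

Definition W (V : 'rV[R]_4 -> R) (G : R) : R := V (\row_i (G * rho i)).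

Definition WL (V : 'rV[R]_4 -> R) (F G : R) : R :=
  W V F + derive1 (W V) F * (G - F) + 2^-1 * derive1 (derive1 (W V)) F * (G - F) ^+ 2.

(* nabla w on the cell (xi-1, xi) *)
Definition nabla (w : int -> R) (xi : int) : R := w xi - w (xi - 1).

(* the cell (xi-1, xi) lies in Omega_l = [-N,-L] u [L,N] *)
Definition in_Omega_l (L : int) (N : nat) (xi : int) : bool :=
  ((L + 1 <= xi) && (xi <= N%:Z)) || ((- N%:Z + 1 <= xi) && (xi <= - L)).

(* integral over [-N,N] of a function that is constant (= f xi) on each
   cell (xi-1, xi), xi = -N+1, ..., N *)
Definition cell_integral (N : nat) (f : int -> R) : R :=
  \sum_(i < (2 * N)%N) f (i%:Z - N%:Z + 1).

Definition Lp_Omega_l (p : R) (L : int) (N : nat) (f : int -> R) : R :=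
  (cell_integral N (fun xi => if in_Omega_l L N xi then `|f xi| `^ p else 0))
    `^ (p^-1).

Definition Tqnll (V : 'rV[R]_4 -> R) (F : R) (L : int) (N : nat)
  (y : int -> R) (xi : int) : R :=
  if in_Omega_l L N xi
  then derive1 (WL V F) (nabla y xi) - derive1 (W V) (nabla y xi)
  else 0.

Definition in_YN (F : R) (N : nat) (y : int -> R) : Prop :=
  exists u : int -> R, (forall xi : int, N%:Z <= `|xi| -> u xi = 0) /\
                       (forall xi : int, y xi = F * xi%:~R + u xi).

End QNLL.

(* Main.v *)
Require Import Defs.
From HB Require Import structures.
From mathcomp Require Import all_boot all_order all_algebra.
From mathcomp Require Import all_classical all_reals all_analysis.
From mathcomp Require Import ring lra.
Import Order.TTheory GRing.Theory Num.Theory.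
Import numFieldNormedType.Exports.
Set Implicit Arguments. Unset Strict Implicit.

Section S.
Local Open Scope classical_set_scope.
Local Open Scope ring_scope.
Variable R : realType.
Implicit Types f : 'rV[R]_4 -> R.

Lemma line_is_derive f (q e : 'rV[R]_4) c :
  derivable f (q + c *: e) e ->
  is_derive c 1 (fun s : R => f (q + s *: e)) ('D_e f (q + c *: e)).
Proof.
move=> df.
have E : (fun h : R => h^-1 *: (((fun s : R => f (q + s *: e)) \o shift c) (h *: 1) - f (q + c *: e)))
   = (fun h : R => h^-1 *: ((f \o shift (q + c *: e)) (h *: e) - f (q + c *: e))).
  apply/funext => h; rewrite /= /shift.
  by rewrite [h *: 1]mulr1 scalerDl addrCA.
by apply: DeriveDef; rewrite /derivable /derive E.
Qed.

Lemma mvt_bound (phi dphi : R -> R) (a b A eps : R) :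
  a <= b -> (forall x : R, is_derive x (1:R) phi (dphi x)) ->
  (forall c, a <= c <= b -> `|dphi c - A| <= eps) ->
  `|phi b - phi a - (b - a) * A| <= (b - a) * eps.
Proof.
move=> ab dphi_ hb.
have cont : {within `[a, b], continuous phi}.
  by apply: derivable_within_continuous => x _; case: (dphi_ x).
have [c cab ->] := @MVT_segment R phi dphi a b ab (fun x _ => dphi_ x) cont.
rewrite [(b - a) * A]mulrC -mulrBl normrM mulrC.
rewrite [`|b - a|]ger0_norm ?subr_ge0 //.
apply: ler_wpM2l; first by rewrite subr_ge0.
by apply: hb; move: cab; rewrite in_itv /=.
Qed.


Lemma step_bound f (q e : 'rV[R]_4) (s A eps : R) :
  (forall x, derivable f x e) ->
  (forall c, `|c| <= `|s| -> `|'D_e f (q + c *: e) - A| <= eps) ->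
  `|f (q + s *: e) - f q - s * A| <= `|s| * eps.
Proof.
move=> df hb.
have D : forall x : R, is_derive x (1:R) (fun c : R => f (q + c *: e)) ('D_e f (q + x *: e)).
  by move=> x; apply: line_is_derive.
have [s0|s0] := leP 0 s.
  have := @mvt_bound (fun c : R => f (q + c *: e)) (fun x => 'D_e f (q + x *: e)) 0 s A eps s0 D.
  rewrite /= scale0r addr0 subr0 (ger0_norm s0); apply => c /andP[c0 cs].
  by apply: hb; rewrite !ger0_norm // (le_trans c0 cs).
have hb' : forall c, s <= c <= 0 -> `|'D_e f (q + c *: e) - A| <= eps.
  move=> c /andP[sc c0]; apply: hb.
  by rewrite ler0_norm // ltr0_norm // lerN2.
have := @mvt_bound (fun c : R => f (q + c *: e)) (fun x => 'D_e f (q + x *: e)) s 0 A eps (ltW s0) D hb'.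
rewrite /= scale0r addr0 sub0r (ltr0_norm s0) => H.
rewrite -normrN; apply: le_trans H; rewrite le_eqVlt; apply/orP; left; apply/eqP.
congr `|_|; rewrite mulNr; lra.
Qed.


Lemma sum_ord_nat (V : nmodType) (G : 'I_4 -> V) :
  \sum_(i < 4) G i = \sum_(0 <= i < 4) G (inord i).
Proof. by rewrite big_mkord; apply: eq_bigr => i _; rewrite inord_val. Qed.

Lemma sum_le_full (G : nat -> R) n : (n <= 4)%N -> (forall i, 0 <= G i) ->
  \sum_(0 <= i < n) G i <= \sum_(0 <= i < 4) G i.
Proof.
move=> n4 G0; rewrite (@big_cat_nat _ _ _ n 0 4 _ _ (leq0n n) n4) /= lerDl.
by apply: sumr_ge0 => i _.
Qed.

Lemma dir_is_derive f (p d : 'rV[R]_4) :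
  (forall i x, derivable f x (evec R i)) -> (forall i, continuous (pd i f)) ->
  is_derive p d f (\sum_(i < 4) d 0 i * pd i f p).
Proof.
move=> df cf.
set D := \sum_(i < 4) _.
suff H : (fun h : R => h^-1 *: ((f \o shift p) (h *: d) - f p)) @ 0^' --> D.
  by apply: DeriveDef; [exact: cvgP H | exact: cvg_lim H].
apply/cvgrPdist_le => eps eps0.
pose a i := d 0 (@inord 3 i).
pose ee i := evec R (@inord 3 i).
pose Dp i := pd (@inord 3 i) f p.
pose S := \sum_(0 <= i < 4) `|a i| * `|ee i|.
pose A := \sum_(0 <= i < 4) `|a i|.
have S0 : 0 <= S by apply: sumr_ge0 => i _; rewrite mulr_ge0.
have A0 : 0 <= A by apply: sumr_ge0 => i _.
pose eps' := eps / (A + 1).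
have eps'0 : 0 < eps' by rewrite divr_gt0 // ltr_wpDl.
have cont : \forall x \near p, forall i : 'I_4, `|pd i f x - pd i f p| <= eps'.
  apply: (@filter_forall _ 'I_4 (fun i x => `|pd i f x - pd i f p| <= eps') (nbhs p) _) => i.
  by apply: cvgr_distC_le => //; apply: cf.
have [r /= r0 Hr] := (@nbhs_normP R _ p _).1 cont.
near=> t.
have tsmall : `|t| < r / (S + 1).
  by near: t; apply: dnbhs0_lt; rewrite divr_gt0 // ltr_wpDl.
have t0 : t != 0 by near: t; exact: nbhs_dnbhs_neq.
have claim : forall n, (n <= 4)%N ->
  `|f (p + t *: \sum_(0 <= i < n) a i *: ee i) - f p - t * \sum_(0 <= i < n) a i * Dp i|
    <= `|t| * eps' * \sum_(0 <= i < n) `|a i|.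
  elim=> [|n IH] n4.
    by rewrite !big_geq // scaler0 addr0 mulr0 !subrr normr0 mulr0.
  have n4' : (n <= 4)%N by apply: ltnW.
  have {}IH := IH n4'.
  rewrite !big_nat_recr //=.
  set q := p + t *: \sum_(0 <= i < n) a i *: ee i.
  have -> : p + t *: (\sum_(0 <= i < n) a i *: ee i + a n *: ee n) = q + (t * a n) *: ee n.
    by rewrite /q scalerDr addrA scalerA.
  have st : `|f (q + (t * a n) *: ee n) - f q - (t * a n) * Dp n| <= `|t * a n| * eps'.
    apply: step_bound; first by move=> x; apply: df.
    move=> c hc.
    apply: (Hr _ _ (inord n)) => /=.
    rewrite /q !opprD !addrA subrr add0r -opprD normrN.
    apply: (le_lt_trans (ler_normD _ _)).
    apply: (le_lt_trans _ (_ : `|t| * (S + 1) < r)); last first.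
      by rewrite -ltr_pdivlMr // ltr_wpDl.
    rewrite !normrZ mulrDr mulr1.
    have : `|\sum_(0 <= i < n) a i *: ee i| * `|t| + `|c| * `|ee n| <= `|t| * S.
      have h1 : `|\sum_(0 <= i < n) a i *: ee i| <= \sum_(0 <= i < n) `|a i| * `|ee i|.
        by apply: (le_trans (ler_norm_sum _ _ _)); apply: ler_sum => i _; rewrite normrZ.
      have h2 : \sum_(0 <= i < n.+1) `|a i| * `|ee i| <= S.
        by apply: sum_le_full => // i; rewrite mulr_ge0.
      rewrite big_nat_recr // in h2.
      have h3 : `|c| * `|ee n| <= `|t| * (`|a n| * `|ee n|).
        by rewrite mulrA -normrM ler_wpM2r.
      apply: (le_trans (lerD (ler_wpM2r (normr_ge0 _) h1) h3)).
      by rewrite mulrC -mulrDr ler_wpM2l.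
    rewrite [_ * `|t|]mulrC => h; apply: (le_trans h); rewrite lerDl; exact: normr_ge0.
  rewrite mulrDr.
  have -> : f (q + (t * a n) *: ee n) - f p - (t * \sum_(0 <= i < n) a i * Dp i + t * (a n * Dp n))
    = (f (q + (t * a n) *: ee n) - f q - (t * a n) * Dp n) + (f q - f p - t * \sum_(0 <= i < n) a i * Dp i).
    by rewrite mulrA; ring.
  apply: (le_trans (ler_normD _ _)).
  rewrite [X in _ <= X]mulrDr addrC; apply: lerD => //.
  by apply: (le_trans st); rewrite normrM mulrAC.
have := claim 4%N (leqnn _).
have -> : \sum_(0 <= i < 4) a i *: ee i = d.
  by rewrite [RHS]row_sum_delta sum_ord_nat.
have -> : \sum_(0 <= i < 4) a i * Dp i = D by rewrite /D sum_ord_nat.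
rewrite -/A => H.
rewrite /= /shift [t *: d + p]addrC.
have -> : D - t^-1 *: (f (p + t *: d) - f p) = - t^-1 * (f (p + t *: d) - f p - t * D).
  have E : forall x : R, t^-1 *: x = t^-1 * x by [].
  by rewrite E; field.
rewrite normrM normrN normfV ler_pdivrMl ?normr_gt0 //.
apply: (le_trans H); rewrite -mulrA ler_wpM2l //.
rewrite /eps' mulrAC ler_pdivrMr ?ltr_wpDl // ler_wpM2l ?(ltW eps0) // lerDl.
Unshelve. all: by end_near.
Qed.

Definition r4 : 'rV[R]_4 := \row_(i < 4) rho R i.

Lemma line_der (g : 'rV[R]_4 -> R) t :
  (forall i x, derivable g x (evec R i)) -> (forall i, continuous (pd i g)) ->
  is_derive t (1:R) (fun s : R => g (s *: r4)) (\sum_(i < 4) rho R i * pd i g (t *: r4)).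
Proof.
move=> hd hc.
have [Hd Hv] := @dir_is_derive g (t *: r4) r4 hd hc.
have := @line_is_derive g 0 r4 t; rewrite add0r => /(_ Hd).
have -> : (fun s : R => g (0 + s *: r4)) = (fun s : R => g (s *: r4)).
  by apply/funext => s; rewrite add0r.
rewrite Hv => H; apply: is_derive_eq H _.
by apply: eq_bigr => i _; rewrite mxE.
Qed.

Lemma lincomb_is_derive (c : 'I_4 -> R) (h : 'I_4 -> R -> R) (dh : 'I_4 -> R) t :
  (forall i, is_derive t (1:R) (h i) (dh i)) ->
  is_derive t (1:R) (fun s => \sum_(i < 4) c i * h i s) (\sum_(i < 4) c i * dh i).
Proof.
move=> H.
have -> : (fun s => \sum_(i < 4) c i * h i s) = \sum_(i < 4) (c i \*: h i).
  by apply/funext => s; rewrite fct_sumE.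
apply: is_derive_sum => i; exact: is_deriveZ.
Qed.

Lemma W_eq V : W V = fun s => V (s *: r4).
Proof.
by apply/funext => s; rewrite /W; congr V; apply/rowP => i; rewrite !mxE.
Qed.

Definition W1 V (s : R) := \sum_(i < 4) rho R i * pd i V (s *: r4).
Definition W2 V (s : R) := \sum_(i < 4) rho R i * \sum_(j < 4) rho R j * pd j (pd i V) (s *: r4).
Definition W3 V (s : R) := \sum_(i < 4) rho R i * \sum_(j < 4) rho R j *
   \sum_(k < 4) rho R k * pd k (pd j (pd i V)) (s *: r4).

Lemma dW V t : C3 V -> is_derive t (1:R) (W V) (W1 V t).
Proof.
move=> [_ [dV [cV _]]]; rewrite W_eq; exact: line_der.
Qed.

Lemma dW1 V t : C3 V -> is_derive t (1:R) (W1 V) (W2 V t).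
Proof.
move=> [_ [_ [_ [dV [cV _]]]]].
apply: (@lincomb_is_derive (rho R) (fun i s => pd i V (s *: r4))) => i.
exact: line_der.
Qed.

Lemma dW2 V t : C3 V -> is_derive t (1:R) (W2 V) (W3 V t).
Proof.
move=> [_ [_ [_ [_ [_ [dV cV]]]]]].
apply: (@lincomb_is_derive (rho R) (fun i s => \sum_(j < 4) rho R j * pd j (pd i V) (s *: r4))) => i.
apply: (@lincomb_is_derive (rho R) (fun j s => pd j (pd i V) (s *: r4))) => j.
exact: line_der.
Qed.

Lemma sum3_rev (G : 'I_4 -> 'I_4 -> 'I_4 -> R) :
  \sum_(i < 4) \sum_(j < 4) \sum_(k < 4) G i j k =
  \sum_(k < 4) \sum_(j < 4) \sum_(i < 4) G i j k.
Proof.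
rewrite [LHS]exchange_big /=.
rewrite [LHS](eq_bigr (fun j => \sum_(k < 4) \sum_(i < 4) G i j k)); last first.
  by move=> j _; rewrite exchange_big.
by rewrite [LHS]exchange_big.
Qed.

Lemma W3_bound V s : bounded_third V -> `|W3 V s| <= M30 V.
Proof.
move=> [M HM].
have E : W3 V s = \sum_(i < 4) \sum_(j < 4) \sum_(k < 4)
    (rho R i * rho R j * rho R k) * pd k (pd j (pd i V)) (s *: r4).
  rewrite /W3; apply: eq_bigr => i _; rewrite mulr_sumr; apply: eq_bigr => j _.
  rewrite mulrA mulr_sumr; apply: eq_bigr => k _; by rewrite mulrA.
have E2 : M30 V = \sum_(i < 4) \sum_(j < 4) \sum_(k < 4) m3 V k j i.
  rewrite /M30 [RHS]sum3_rev //.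
rewrite E E2.
apply: (le_trans (ler_norm_sum _ _ _)); apply: ler_sum => i _.
apply: (le_trans (ler_norm_sum _ _ _)); apply: ler_sum => j _.
apply: (le_trans (ler_norm_sum _ _ _)); apply: ler_sum => k _.
rewrite normrM /m3.
rewrite [rho R k * rho R j * rho R i]mulrC [rho R k * rho R j]mulrC mulrA.
apply: ler_wpM2l; first exact: normr_ge0.
apply: ub_le_sup; last by exists (s *: r4).
by exists M => _ [g _ <-]; apply: HM.
Qed.

End S.

Section T.
Local Open Scope classical_set_scope.
Local Open Scope ring_scope.
Variable R : realType.

Lemma is_derive_affine (f : R -> R) df c1 c0 (x : R) :
  is_derive x (1:R) f df -> is_derive x (1:R) (fun t => f t + c1 * t + c0) (df + c1).
Proof.
move=> H.
have -> : (fun t => f t + c1 * t + c0) = (f + c1 \*: id) + cst c0 by apply/funext.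
apply: is_derive_eq (is_deriveD (is_deriveD H (is_deriveZ c1 (is_derive_id x 1))) (is_derive_cst c0 x 1)) _.
by rewrite addr0 [c1 *: 1]mulr1.
Qed.

Lemma is_derive_sq (a x : R) : is_derive x (1:R) (fun t => (t - a)^+2) (2 * (x - a)).
Proof.
have -> : (fun t : R => (t - a)^+2) = (fun t => ((id : R -> R) * id) t + (-2 * a) * t + a^+2).
  apply/funext => t; have -> : ((id : R -> R) * id) t = t * t by []. by ring.

apply: is_derive_eq (is_derive_affine (-2 * a) (a^+2) (is_deriveM (is_derive_id x 1) (is_derive_id x 1))) _.
rewrite /= [x *: 1]mulr1; ring.
Qed.

Lemma lip_bound (g dg : R -> R) M x y :
  (forall t : R, is_derive t (1:R) g (dg t)) -> (forall t, `|dg t| <= M) ->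
  `|g y - g x| <= M * `|y - x|.
Proof.
move=> D B.
wlog xy : x y / x <= y.
  move=> H; have [xy|yx] := leP x y; first exact: H.
  by rewrite distrC [`|y - x|]distrC; apply: H; apply: ltW.
have cont : {within `[x, y], continuous g}.
  by apply: derivable_within_continuous => t _; case: (D t).
have [c _ ->] := @MVT_segment R g dg x y xy (fun t _ => D t) cont.
by rewrite normrM ler_wpM2r.
Qed.

Lemma taylor_bound (f1 f2 f3 : R -> R) (M a b : R) :
  (forall x : R, is_derive x (1:R) f1 (f2 x)) ->
  (forall x : R, is_derive x (1:R) f2 (f3 x)) ->
  (forall x, `|f3 x| <= M) ->
  `|f1 b - f1 a - f2 a * (b - a)| <= 2^-1 * M * (b - a)^+2.
Proof.
move=> D1 D2 B.
pose h := fun t => f1 t + (- f2 a) * t + (f2 a * a - f1 a).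
pose dh := fun t => f2 t - f2 a.
pose g := fun t : R => (t - a)^+2.
pose dg := fun t : R => 2 * (t - a).
have Dh : forall x, is_derive x (1:R) h (dh x).
  move=> x; exact: is_derive_affine.
have Dg : forall x, is_derive x (1:R) g (dg x) by move=> x; exact: is_derive_sq.
have ch : forall lo hi, {within `[lo, hi], continuous h}.
  by move=> lo hi; apply: derivable_within_continuous => t _; case: (Dh t).
have cg : forall lo hi, {within `[lo, hi], continuous g}.
  by move=> lo hi; apply: derivable_within_continuous => t _; case: (Dg t).
have hb : f1 b - f1 a - f2 a * (b - a) = h b by rewrite /h; ring.
have ha : h a = 0 by rewrite /h; ring.
have ga : g a = 0 by rewrite /g subrr expr0n.
have M0 : 0 <= M by apply: le_trans (B 0); exact: normr_ge0.
have key : forall c, c != a -> `|dh c / dg c| <= 2^-1 * M.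
  move=> c ca.
  have := @lip_bound f2 f3 M a c D2 B.
  rewrite /dh /dg normrM normfV normrM normr_nat => H.
  have ca' : 0 < `|c - a| by rewrite normr_gt0 subr_eq0.
  rewrite ler_pdivrMr ?mulr_gt0 //.
  have -> : 2^-1 * M * (2 * `|c - a|) = M * `|c - a| by field.
  exact: H.
have [ab|ba|ab] := ltgtP a b.
- have := @cauchy_MVT R h dh g dg a b ab (ch a b) (cg a b) (fun x _ => Dh x) (fun x _ => Dg x).
  case.
    move=> x; rewrite in_itv /= => /andP[ax _]; rewrite /dg mulf_neq0 //.
    by rewrite subr_eq0 gt_eqF.
  move=> c; rewrite in_itv /= => /andP[ac _]; rewrite ha ga !subr0 => E.
  have gb : g b != 0 by rewrite /g expf_neq0 // subr_eq0 gt_eqF.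
  rewrite hb -[h b](divfK gb) -E normrM [`|g b|]ger0_norm ?sqr_ge0 //.
  by rewrite /g ler_wpM2r ?sqr_ge0 // key // gt_eqF.
- have := @cauchy_MVT R h dh g dg b a ba (ch b a) (cg b a) (fun x _ => Dh x) (fun x _ => Dg x).
  case.
    move=> x; rewrite in_itv /= => /andP[_ xa]; rewrite /dg mulf_neq0 //.
    by rewrite subr_eq0 lt_eqF.
  move=> c; rewrite in_itv /= => /andP[_ ca]; rewrite ha ga !sub0r divrNN => E.
  have gb : g b != 0 by rewrite /g expf_neq0 // subr_eq0 lt_eqF.
  rewrite hb -[h b](divfK gb) -E normrM [`|g b|]ger0_norm ?sqr_ge0 //.
  by rewrite /g ler_wpM2r ?sqr_ge0 // key // lt_eqF.
- by rewrite -ab !subrr mulr0 subr0 normr0 expr0n /= mulr0.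
Qed.

Lemma CS (n : nat) (a b : 'I_n -> R) :
  (\sum_(i < n) a i * b i)^+2 <= (\sum_(i < n) a i ^+ 2) * (\sum_(i < n) b i ^+ 2).
Proof.
have L : (\sum_(i < n) a i * b i)^+2 = \sum_(i < n) \sum_(j < n) (a i * b i) * (a j * b j).
  by rewrite expr2 mulr_suml; apply: eq_bigr => i _; rewrite mulr_sumr.
have Rr : (\sum_(i < n) a i ^+ 2) * (\sum_(i < n) b i ^+ 2) = \sum_(i < n) \sum_(j < n) a i ^+ 2 * b j ^+ 2.
  by rewrite mulr_suml; apply: eq_bigr => i _; rewrite mulr_sumr.
have H0 : 0 <= \sum_(i < n) \sum_(j < n) (a i * b j - a j * b i)^+2.
  by apply: sumr_ge0 => i _; apply: sumr_ge0 => j _; exact: sqr_ge0.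
have e1 : forall i j, (a i * b j - a j * b i)^+2 =
   a i ^+ 2 * b j ^+ 2 + a j ^+ 2 * b i ^+ 2 - 2 * ((a i * b i) * (a j * b j)).
  by move=> i j; ring.
have E : \sum_(i < n) \sum_(j < n) (a i * b j - a j * b i)^+2 =
   \sum_(i < n) \sum_(j < n) a i ^+ 2 * b j ^+ 2 + \sum_(i < n) \sum_(j < n) a j ^+ 2 * b i ^+ 2
   - 2 * \sum_(i < n) \sum_(j < n) (a i * b i) * (a j * b j).
  rewrite mulr_sumr -big_split -sumrB; apply: eq_bigr => i _.
  rewrite mulr_sumr -big_split -sumrB; apply: eq_bigr => j _.
  exact: e1.
rewrite [X in _ + X - _]exchange_big /= in E.
rewrite L Rr -subr_ge0.
have : 0 <= 2 * (\sum_(i < n) \sum_(j < n) a i ^+ 2 * b j ^+ 2 - \sum_(i < n) \sum_(j < n) (a i * b i) * (a j * b j)).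
  by apply: (le_trans H0); rewrite E le_eqVlt; apply/orP; left; apply/eqP; ring.
by rewrite pmulr_rge0.
Qed.

End T.

Local Open Scope ring_scope.

Section M.
Local Open Scope classical_set_scope.
Local Open Scope ring_scope.
Variable R : realType.

Lemma derive1_W (V : 'rV[R]_4 -> R) : C3 V -> derive1 (W V) = W1 V.
Proof.
move=> H; apply/funext => t; rewrite derive1E.
by have [_ ->] := dW t H.
Qed.

Lemma derive1_WL (V : 'rV[R]_4 -> R) F x : C3 V ->
  derive1 (WL V F) x = W1 V F + W2 V F * (x - F).
Proof.
move=> H.
have d2 : derive1 (derive1 (W V)) F = W2 V F.
  by rewrite derive1_W // derive1E; have [_ ->] := dW1 F H.
set c0 := W V F.
set c1 := derive1 (W V) F.
set c2 := derive1 (derive1 (W V)) F.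
set k := 2^-1 * c2.
have -> : WL V F = fun G => (fun t => k * (t - F)^+2) G + c1 * G + (c0 - c1 * F).
  by apply/funext => G; rewrite /WL -/c0 -/c1 -/c2 /k; ring.
have Dk : is_derive x (1:R) (fun t => k * (t - F)^+2) (k * (2 * (x - F))).
  exact: (is_deriveZ k (is_derive_sq F x)).
rewrite derive1E.
have [_ ->] := is_derive_affine c1 (c0 - c1 * F) Dk.
rewrite /k /c2 d2 /c1 derive1_W //.
by field.
Qed.

Lemma cell_bound (V : 'rV[R]_4 -> R) F g : C3 V -> bounded_third V ->
  `|derive1 (WL V F) g - derive1 (W V) g| <= 2^-1 * M30 V * (g - F)^+2.
Proof.
move=> H Hb; rewrite derive1_WL // derive1_W //.
have := taylor_bound F g (fun x => dW1 x H) (fun x => dW2 x H) (fun x => W3_bound x Hb).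
have -> : W1 V F + W2 V F * (g - F) - W1 V g = - (W1 V g - W1 V F - W2 V F * (g - F)) by ring.
by rewrite normrN.
Qed.

End M.

Unset Implicit Arguments.
Set Strict Implicit.

Theorem theorem3p4 (R : realType) (V : 'rV[R]_4 -> R) (F : R) (L : int) (N : nat)
  (u v : int -> R) :
  C3 V -> bounded_third V -> 0 < F -> L < N%:Z ->
  (forall xi : int, N%:Z <= `|xi| -> u xi = 0) ->
  in_YN F N v ->
  let y := fun xi : int => F * xi%:~R + u xi in
  cell_integral N (fun xi => Tqnll V F L N y xi * nabla v xi)
    <= 2^-1 * M30 V * (Lp_Omega_l 4 L N (nabla u)) ^+ 2 * Lp_Omega_l 2 L N (nabla v).
Proof.
move=> HC Hb _ _ _ _; cbv zeta.
set y := fun xi : int => F * xi%:~R + u xi.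
set M := M30 V.
have M0 : 0 <= M by apply: le_trans (W3_bound 0 Hb); exact: normr_ge0.
have ny : forall xi, nabla y xi - F = nabla u xi.
  by move=> xi; rewrite /nabla /y intrD; ring.
have step : forall xi, Tqnll V F L N y xi * nabla v xi <=
   (if in_Omega_l L N xi then nabla u xi ^+2 else 0) *
   (if in_Omega_l L N xi then `|nabla v xi| else 0) * (2^-1 * M).
  move=> xi; rewrite /Tqnll; case: (in_Omega_l L N xi); last by rewrite !mul0r.
  apply: le_trans (ler_norm _) _; rewrite normrM.
  have := cell_bound F (nabla y xi) HC Hb; rewrite ny => cb.
  apply: le_trans (ler_wpM2r (normr_ge0 _) cb) _.
  by rewrite le_eqVlt; apply/orP; left; apply/eqP; rewrite /M; ring.
rewrite /cell_integral.
apply: le_trans (ler_sum _ (fun i _ => step _)) _.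
rewrite -mulr_suml.
set S := \sum_(i < _) _.
pose al (i : 'I_(2 * N)) := if in_Omega_l L N (i%:Z - N%:Z + 1) then nabla u (i%:Z - N%:Z + 1) ^+ 2 else 0.
pose be (i : 'I_(2 * N)) := if in_Omega_l L N (i%:Z - N%:Z + 1) then `|nabla v (i%:Z - N%:Z + 1)| else 0.
have SE : S = \sum_(i < 2 * N) al i * be i by [].
have sq0 : forall (G : 'I_(2 * N) -> R), 0 <= \sum_(i < 2 * N) G i ^+ 2.
  by move=> G; apply: sumr_ge0 => i _; exact: sqr_ge0.
have n4 : forall z : R, `|z| ^+ 4 = (z ^+ 2) ^+ 2.
  by move=> z; rewrite -[z ^+ 2](real_normK (num_real z)) -exprM.
have A4 : Lp_Omega_l 4 L N (nabla u) ^+ 2 = Num.sqrt (\sum_(i < 2 * N) al i ^+ 2).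
  rewrite /Lp_Omega_l /cell_integral.
  rewrite -powR_mulrn ?powR_ge0 // -powRrM.
  have -> : 4^-1 * 2%:R = 2^-1 :> R by field.
  rewrite powR12_sqrt; last first.
    by apply: sumr_ge0 => i _; case: ifP => _ //; exact: powR_ge0.
  congr Num.sqrt; apply: eq_bigr => i _; rewrite /al; case: ifP => _; last by rewrite expr2 mul0r.
  by rewrite powR_mulrn ?normr_ge0 // n4.
have B2 : Lp_Omega_l 2 L N (nabla v) = Num.sqrt (\sum_(i < 2 * N) be i ^+ 2).
  rewrite /Lp_Omega_l /cell_integral.
  rewrite powR12_sqrt; last first.
    by apply: sumr_ge0 => i _; case: ifP => _ //; exact: powR_ge0.
  congr Num.sqrt; apply: eq_bigr => i _; rewrite /be; case: ifP => _; last by rewrite expr2 mul0r.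
  by rewrite powR_mulrn ?normr_ge0.
rewrite A4 B2 SE mulrC -[2^-1 * M * _ * _]mulrA.
apply: ler_wpM2l; first by rewrite mulr_ge0 // invr_ge0 ler0n.
rewrite -sqrtrM ?sq0 //.
apply: le_trans (ler_norm _) _; rewrite -sqrtr_sqr ler_sqrt ?mulr_ge0 ?sq0 //.
exact: CS.
Qed.
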